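(* Let $(\mathcal R,\Sigma,\Delta)$ be a right triangulated category with right semi-equivalence and let $(\mathcal U,\mathcal V)$ be a torsion pair in $\mathcal R$. The following are equivalent: (a) $\Sigma\mathcal U\subseteq\mathcal U$; (b) $\Sigma^{-1}\mathcal V\subseteq\mathcal V$, where $\Sigma^{-1}\mathcal V=\{X\in\mathcal R:\Sigma X\in\mathcal V\}$; (c) $\mathcal R(\Sigma\mathcal U,\mathcal V)=0$; (d) $\Sigma$ maps $\mathcal V$-monic morphisms to $\mathcal V$-monic morphisms.
   Context: All categories are additive and idempotent complete. A right triangulated category $(\mathcal R,\Sigma,\Delta)$: additive category, additive endofunctor $\Sigma$, class $\Delta$ of right triangles $A\to B\to C\to\Sigma A$ satisfying the axioms of a triangulated category except that $\Sigma$ need not be an equivalence and only rotation to the right ($B\xrightarrow{y}C\xrightarrow{z}\Sigma A\xrightarrow{-\Sigma x}\Sigma B$) is required. $\Sigma$ is a right semi-equivalence if it is fully faithful and its essential image is closed under extensions in right triangles. A torsion pair in $\mathcal R$ is a pair $(\mathcal U,\mathcal V)$ of additive subcategories (closed under isomorphisms, sums, summands) with $\mathcal R(\mathcal U,\mathcal V)=0$ such that each $C\in\mathcal R$ admits a right triangle $U\to C\to V\to\Sigma U$ with $U\in\mathcal U$, $V\in\mathcal V$. A morphism $f:A\to B$ is $\mathcal V$-monic if every morphism $A\to V$ with $V\in\mathcal V$ factors through $f$. *)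

(* Defs.v *)
From HB Require Import structures.
From mathcomp Require Import all_boot all_algebra.
Set Implicit Arguments. Unset Strict Implicit. Unset Printing Implicit Defensive.
Import GRing.Theory.
Local Open Scope ring_scope.

Record precat := Precat {
  Obj : Type;
  hom : Obj -> Obj -> zmodType;
  idm : forall A, hom A A;
  comp : forall A B C, hom B C -> hom A B -> hom A C }.
Arguments idm {p} A.
Arguments comp {p A B C}.

Section Cat.
Variable C : precat.
Local Notation Ob := (Obj C).
Local Notation Hom := (@hom C).

Definition is_zero_obj (Z : Ob) : Prop :=
  forall A : Ob, (forall f g : Hom Z A, f = g) /\ (forall f g : Hom A Z, f = g).

Definition is_biprod (A B S : Ob) (i1 : Hom A S) (i2 : Hom B S)
  (p1 : Hom S A) (p2 : Hom S B) : Prop :=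
  [/\ comp p1 i1 = idm A, comp p2 i2 = idm B, comp p1 i2 = 0, comp p2 i1 = 0
    & comp i1 p1 + comp i2 p2 = idm S].

Definition is_iso (A B : Ob) (f : Hom A B) : Prop :=
  exists g : Hom B A, comp g f = idm A /\ comp f g = idm B.

Definition isomorphic (A B : Ob) : Prop := exists f : Hom A B, is_iso f.

Definition is_additive : Prop :=
  (forall (A B D E : Ob) (h : Hom D E) (g : Hom B D) (f : Hom A B),
      comp h (comp g f) = comp (comp h g) f) /\
  (forall (A B : Ob) (f : Hom A B), comp (idm B) f = f) /\
  (forall (A B : Ob) (f : Hom A B), comp f (idm A) = f) /\
  (forall (A B D : Ob) (g g' : Hom B D) (f : Hom A B),
      comp (g + g') f = comp g f + comp g' f) /\
  (forall (A B D : Ob) (g : Hom B D) (f f' : Hom A B),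
      comp g (f + f') = comp g f + comp g f') /\
  (exists Z : Ob, is_zero_obj Z) /\
  (forall A B : Ob, exists (S : Ob) (i1 : Hom A S) (i2 : Hom B S)
      (p1 : Hom S A) (p2 : Hom S B), is_biprod i1 i2 p1 p2) /\
  (* idempotent completeness: every idempotent splits *)
  (forall (A : Ob) (e : Hom A A), comp e e = e ->
      exists (B : Ob) (r : Hom A B) (s : Hom B A),
        comp s r = e /\ comp r s = idm B).

Variable Sig : Ob -> Ob.
Variable Sigf : forall A B : Ob, Hom A B -> Hom (Sig A) (Sig B).
Variable Delta : forall A B D : Ob, Hom A B -> Hom B D -> Hom D (Sig A) -> Prop.

Definition is_additive_functor : Prop :=
  (forall A : Ob, Sigf (idm A) = idm (Sig A)) /\
  (forall (A B D : Ob) (g : Hom B D) (f : Hom A B),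
      Sigf (comp g f) = comp (Sigf g) (Sigf f)) /\
  (forall (A B : Ob) (f f' : Hom A B), Sigf (f + f') = Sigf f + Sigf f').

Definition is_right_triangulated : Prop :=
  is_additive /\ is_additive_functor /\
  (forall (A B D A' B' D' : Ob) (f : Hom A B) (g : Hom B D) (h : Hom D (Sig A))
      (f' : Hom A' B') (g' : Hom B' D') (h' : Hom D' (Sig A'))
      (a : Hom A A') (b : Hom B B') (c : Hom D D'),
      Delta f g h -> is_iso a -> is_iso b -> is_iso c ->
      comp b f = comp f' a -> comp c g = comp g' b ->
      comp (Sigf a) h = comp h' c -> Delta f' g' h') /\
  (forall (A Z : Ob), is_zero_obj Z ->
      Delta (idm A) (0 : Hom A Z) (0 : Hom Z (Sig A))) /\
  (forall (A B : Ob) (f : Hom A B),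
      exists (D : Ob) (g : Hom B D) (h : Hom D (Sig A)), Delta f g h) /\
  (forall (A B D : Ob) (f : Hom A B) (g : Hom B D) (h : Hom D (Sig A)),
      Delta f g h -> Delta g h (- Sigf f)) /\
  (forall (A B D A' B' D' : Ob) (f : Hom A B) (g : Hom B D) (h : Hom D (Sig A))
      (f' : Hom A' B') (g' : Hom B' D') (h' : Hom D' (Sig A'))
      (a : Hom A A') (b : Hom B B'),
      Delta f g h -> Delta f' g' h' -> comp b f = comp f' a ->
      exists c : Hom D D', comp c g = comp g' b /\ comp (Sigf a) h = comp h' c) /\
  (forall (A B D C' A' B' : Ob) (f : Hom A B) (u : Hom B D)
      (g : Hom B C') (h : Hom C' (Sig A))
      (v : Hom D A') (w : Hom A' (Sig B))
      (x : Hom D B') (y : Hom B' (Sig A)),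
      Delta f g h -> Delta u v w -> Delta (comp u f) x y ->
      exists (a : Hom C' B') (b : Hom B' A'),
        Delta a b (comp (Sigf g) w) /\
        comp a g = comp x u /\ comp y a = h /\ comp b x = v /\
        comp (Sigf f) y = comp w b).

Definition right_semi_equivalence : Prop :=
  (forall A B : Ob, bijective (@Sigf A B)) /\
  (forall (A B D : Ob) (f : Hom A B) (g : Hom B D) (h : Hom D (Sig A)),
      Delta f g h ->
      (exists A', isomorphic A (Sig A')) -> (exists D', isomorphic D (Sig D')) ->
      exists B', isomorphic B (Sig B')).

Definition additive_subcat (P : Ob -> Prop) : Prop :=
  (forall A B : Ob, isomorphic A B -> P A -> P B) /\
  (exists Z : Ob, is_zero_obj Z /\ P Z) /\
  (forall (A B S : Ob) (i1 : Hom A S) (i2 : Hom B S) (p1 : Hom S A) (p2 : Hom S B),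
      is_biprod i1 i2 p1 p2 -> P A -> P B -> P S) /\
  (forall (A B S : Ob) (i1 : Hom A S) (i2 : Hom B S) (p1 : Hom S A) (p2 : Hom S B),
      is_biprod i1 i2 p1 p2 -> P S -> P A /\ P B).

Definition torsion_pair (U V : Ob -> Prop) : Prop :=
  additive_subcat U /\ additive_subcat V /\
  (forall (A B : Ob) (f : Hom A B), U A -> V B -> f = 0) /\
  (forall X : Ob, exists (U0 V0 : Ob) (f : Hom U0 X) (g : Hom X V0)
      (h : Hom V0 (Sig U0)), [/\ U U0, V V0 & Delta f g h]).

Definition V_monic (V : Ob -> Prop) (A B : Ob) (f : Hom A B) : Prop :=
  forall (W : Ob) (x : Hom A W), V W -> exists y : Hom B W, comp y f = x.

End Cat.

(* Main.v *)
Require Import Defs.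
From HB Require Import structures.
From mathcomp Require Import all_boot all_algebra.
Import Defs.
Set Implicit Arguments. Unset Strict Implicit.
Import GRing.Theory.
Local Open Scope ring_scope.

Section Pf.
Variable C : precat.
Variable Sig : Obj C -> Obj C.
Variable Sigf : forall A B : Obj C, hom A B -> hom (Sig A) (Sig B).
Variable Delta : forall A B D : Obj C, hom A B -> hom B D -> hom D (Sig A) -> Prop.
Hypothesis HRT : is_right_triangulated Sigf Delta.
Hypothesis HSE : right_semi_equivalence Sigf Delta.
Local Notation Sf f := (Sigf f).
Local Notation Tri f g h := (Delta f g h).

Lemma x2 (M : zmodType) (x : M) : x = x + x -> x = 0.
Proof. move=> H; have: x - x = x + x - x by rewrite -H. by rewrite subrr addrK. Qed.

Lemma compA (A B D E : Obj C) (h : hom D E) (g : hom B D) (f : hom A B) :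
  comp h (comp g f) = comp (comp h g) f.
Proof. by case: HRT => [[H _] _]; apply: H. Qed.
Lemma comp1l (A B : Obj C) (f : hom A B) : comp (idm B) f = f.
Proof. by case: HRT => [[_ [H _]] _]; apply: H. Qed.
Lemma comp1r (A B : Obj C) (f : hom A B) : comp f (idm A) = f.
Proof. by case: HRT => [[_ [_ [H _]]] _]; apply: H. Qed.
Lemma compDl (A B D : Obj C) (g g' : hom B D) (f : hom A B) :
  comp (g + g') f = comp g f + comp g' f.
Proof. by case: HRT => [[_ [_ [_ [H _]]]] _]; apply: H. Qed.
Lemma compDr (A B D : Obj C) (g : hom B D) (f f' : hom A B) :
  comp g (f + f') = comp g f + comp g f'.
Proof. by case: HRT => [[_ [_ [_ [_ [H _]]]]] _]; apply: H. Qed.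
Lemma zero_ex : exists Z : Obj C, is_zero_obj Z.
Proof. by case: HRT => [[_ [_ [_ [_ [_ [H _]]]]]] _]. Qed.
Lemma idem_split (A : Obj C) (e : hom A A) : comp e e = e ->
  exists (B : Obj C) (r : hom A B) (s : hom B A), comp s r = e /\ comp r s = idm B.
Proof. by case: HRT => [[_ [_ [_ [_ [_ [_ [_ H]]]]]]] _]; apply: H. Qed.
Lemma Sid (A : Obj C) : Sf (idm A) = idm (Sig A).
Proof. by case: HRT => [_ [[H _] _]]; apply: H. Qed.
Lemma Scomp (A B D : Obj C) (g : hom B D) (f : hom A B) :
  Sf (comp g f) = comp (Sf g) (Sf f).
Proof. by case: HRT => [_ [[_ [H _]] _]]; apply: H. Qed.
Lemma SD (A B : Obj C) (f f' : hom A B) : Sf (f + f') = Sf f + Sf f'.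
Proof. by case: HRT => [_ [[_ [_ H]] _]]; apply: H. Qed.

Lemma RTiso (A B D A' B' D' : Obj C) (f : hom A B) (g : hom B D) (h : hom D (Sig A))
      (f' : hom A' B') (g' : hom B' D') (h' : hom D' (Sig A'))
      (a : hom A A') (b : hom B B') (c : hom D D') :
      Tri f g h -> is_iso a -> is_iso b -> is_iso c ->
      comp b f = comp f' a -> comp c g = comp g' b ->
      comp (Sf a) h = comp h' c -> Tri f' g' h'.
Proof. by case: HRT => [_ [_ [H _]]]; apply: H. Qed.
Lemma RTid (A Z : Obj C) : is_zero_obj Z ->
      Tri (idm A) (0 : hom A Z) (0 : hom Z (Sig A)).
Proof. by case: HRT => [_ [_ [_ [H _]]]]; apply: H. Qed.
Lemma RTex (A B : Obj C) (f : hom A B) :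
      exists (D : Obj C) (g : hom B D) (h : hom D (Sig A)), Tri f g h.
Proof. by case: HRT => [_ [_ [_ [_ [H _]]]]]; apply: H. Qed.
Lemma RTrot (A B D : Obj C) (f : hom A B) (g : hom B D) (h : hom D (Sig A)) :
      Tri f g h -> Tri g h (- Sf f).
Proof. by case: HRT => [_ [_ [_ [_ [_ [H _]]]]]]; apply: H. Qed.
Lemma RT3 (A B D A' B' D' : Obj C) (f : hom A B) (g : hom B D) (h : hom D (Sig A))
      (f' : hom A' B') (g' : hom B' D') (h' : hom D' (Sig A'))
      (a : hom A A') (b : hom B B') :
      Tri f g h -> Tri f' g' h' -> comp b f = comp f' a ->
      exists c : hom D D', comp c g = comp g' b /\ comp (Sf a) h = comp h' c.
Proof. by case: HRT => [_ [_ [_ [_ [_ [_ [H _]]]]]]]; apply: H. Qed.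

Lemma comp0l (A B D : Obj C) (f : hom A B) : comp (0 : hom B D) f = 0.
Proof. by apply: x2; rewrite -compDl addr0. Qed.
Lemma comp0r (A B D : Obj C) (g : hom B D) : comp g (0 : hom A B) = 0.
Proof. by apply: x2; rewrite -compDr addr0. Qed.
Lemma compNl (A B D : Obj C) (g : hom B D) (f : hom A B) : comp (- g) f = - comp g f.
Proof. by apply/eqP; rewrite -addr_eq0 -compDl addNr comp0l. Qed.
Lemma compNr (A B D : Obj C) (g : hom B D) (f : hom A B) : comp g (- f) = - comp g f.
Proof. by apply/eqP; rewrite -addr_eq0 -compDr addNr comp0r. Qed.
Lemma S0 (A B : Obj C) : Sf (0 : hom A B) = 0.
Proof. by apply: x2; rewrite -SD addr0. Qed.
Lemma SN (A B : Obj C) (f : hom A B) : Sf (- f) = - Sf f.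
Proof. by apply/eqP; rewrite -addr_eq0 -SD addNr S0. Qed.
Lemma Sinj (A B : Obj C) (f g : hom A B) : Sf f = Sf g -> f = g.
Proof. by case: HSE => H _; apply: bij_inj. Qed.
Lemma Ssurj (A B : Obj C) (c : hom (Sig A) (Sig B)) : exists y, Sf y = c.
Proof. case: HSE => H _; case: (H A B) => g _ K; by exists (g c). Qed.

Lemma SZ (Z : Obj C) : is_zero_obj Z -> is_zero_obj (Sig Z).
Proof.
move=> HZ; have e : idm (Sig Z) = 0 by rewrite -Sid (proj1 (HZ Z) (idm Z) 0) S0.
move=> A; split=> f g.
  by rewrite -(comp1r f) -(comp1r g) e !comp0r.
by rewrite -(comp1l f) -(comp1l g) e !comp0l.
Qed.

Lemma E2 (A B D W : Obj C) (f : hom A B) (g : hom B D) (h : hom D (Sig A)) (x : hom W B) :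
  Tri f g h -> comp g x = 0 -> exists y : hom W A, comp f y = x.
Proof.
move=> T gx; have [Z HZ] := zero_ex.
have T0 : Tri (0 : hom W Z) (0 : hom Z (Sig W)) (- Sf (idm W)).
  by apply: RTrot; apply: RTid.
have := RT3 (a:=x) (b:=(0 : hom Z D)) T0 (RTrot T).
case; first by rewrite comp0l gx.
move=> c [_ Hc]; have [y ey] := Ssurj c; exists y; apply: Sinj.
move: Hc; rewrite compNr compNl Sid comp1r -ey -Scomp.
by move/oppr_inj.
Qed.

Lemma triZ (Z W : Obj C) : is_zero_obj Z -> Tri (0 : hom Z W) (idm W) (0 : hom W (Sig Z)).
Proof.
move=> HZ; have [E [g' [h' T]]] := RTex (0 : hom Z W).
have SZ' := SZ HZ.
have [y Hy] : exists y : hom E W, comp g' y = idm E.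
  apply: (E2 (RTrot T)); exact: (proj2 (SZ' E)).
have Hy2 : comp y g' = idm W.
  have [y0 Hy0] : exists y0 : hom W Z, comp (0 : hom Z W) y0 = comp y g' - idm W.
    apply: (E2 T). by rewrite compDr compNr compA Hy comp1l comp1r subrr.
  by apply/eqP; rewrite -subr_eq0 -Hy0 comp0l.
apply: (RTiso (a:=idm Z) (b:=idm W) (c:=y) T).
- by exists (idm Z); rewrite comp1l.
- by exists (idm W); rewrite comp1l.
- by exists g'.
- by rewrite comp0r comp0l.
- by rewrite comp1l.
- exact: (proj2 (SZ' E)).
Qed.

Lemma E1 (A B D W : Obj C) (f : hom A B) (g : hom B D) (h : hom D (Sig A)) (x : hom B W) :
  Tri f g h -> comp x f = 0 -> exists y : hom D W, comp y g = x.
Proof.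
move=> T xf; have [Z HZ] := zero_ex.
have := RT3 (a:=(0 : hom A Z)) (b:=x) T (triZ W HZ).
case; first by rewrite xf comp0r.
by move=> c [Hc _]; exists c; rewrite Hc comp1l.
Qed.

Lemma summand (P : Obj C -> Prop) (Y S : Obj C) (s : hom Y S) (r : hom S Y) :
  additive_subcat P -> comp r s = idm Y -> P S -> P Y.
Proof.
move=> [_ [_ [_ HP]]] rs PS.
set e := idm S - comp s r.
have es : comp e s = 0 by rewrite /e compDl compNl comp1l -compA rs comp1r subrr.
have re : comp r e = 0 by rewrite /e compDr compNr comp1r compA rs comp1l subrr.
have ee : comp e e = e.
  by rewrite {1}/e compDl compNl comp1l -compA re comp0r subr0.
have [B [r' [s' [H1 H2]]]] := idem_split ee.
have bp : is_biprod s s' r r'.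
  split => //.
  - have -> : s' = comp e s' by rewrite -H1 -compA H2 comp1r.
    by rewrite compA re comp0l.
  - have -> : r' = comp r' e by rewrite -H1 compA H2 comp1l.
    by rewrite -compA es comp0r.
  - by rewrite H1 /e addrC subrK.
exact: (proj1 (HP _ _ _ _ _ _ _ bp PS)).
Qed.

Lemma iso_refl (A : Obj C) : isomorphic A A.
Proof. by exists (idm A); exists (idm A); rewrite comp1l. Qed.

Variables U V : Obj C -> Prop.
Hypothesis HUV : torsion_pair Delta U V.

Lemma HUa : additive_subcat U. Proof. by case: HUV. Qed.
Lemma HVa : additive_subcat V. Proof. by case: HUV => _ []. Qed.
Lemma orth (A B : Obj C) (f : hom A B) : U A -> V B -> f = 0.
Proof. by case: HUV => _ [_ [H _]]; apply: H. Qed.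
Lemma ttri (X : Obj C) : exists (U0 V0 : Obj C) (f : hom U0 X) (g : hom X V0)
      (h : hom V0 (Sig U0)), [/\ U U0, V V0 & Tri f g h].
Proof. by case: HUV => _ [_ [_ H]]; apply: H. Qed.

Definition Pa := forall X : Obj C, U X -> U (Sig X).
Definition Pb := forall X : Obj C, V (Sig X) -> V X.
Definition Pc := forall (X Y : Obj C) (f : hom (Sig X) Y), U X -> V Y -> f = 0.
Definition Pd := forall (A B : Obj C) (f : hom A B),
          V_monic V f -> V_monic V (Sigf f).

Lemma a_c : Pa -> Pc.
Proof. move=> Ha X Y f UX VY; exact: orth (Ha _ UX) VY. Qed.

Lemma c_b : Pc -> Pb.
Proof.
move=> Hc X VX.
have [U0 [V0 [f [g [h [UU VV T]]]]]] := ttri X.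
have Sf0 : Sf f = 0 := Hc _ _ (Sf f) UU VX.
have T3 := RTrot (RTrot (RTrot T)).
have [y Hy] : exists y, comp y (- Sf g) = idm (Sig X).
  by apply: (E1 T3); rewrite comp1l Sf0 oppr0.
have [y' ey'] := Ssurj y.
have e : comp (- y') g = idm X.
  apply: Sinj; rewrite compNl SN Scomp ey' Sid.
  by rewrite -compNr Hy.
exact: summand HVa e VV.
Qed.

Lemma isoV (V0 : Obj C) (U0 X : Obj C) (f : hom U0 (Sig X)) (g : hom (Sig X) V0)
   (h : hom V0 (Sig U0)) : Tri f g h -> exists V', isomorphic V0 (Sig V').
Proof.
move=> T; apply: (proj2 HSE _ _ _ _ _ _ (RTrot T)).
  by exists X; exact: iso_refl.
by exists U0; exact: iso_refl.
Qed.

Lemma b_c : Pb -> Pc.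
Proof.
move=> Hb X Y f UX VY.
have [U0 [V0 [f0 [g [h [UU VV T]]]]]] := ttri (Sig X).
have [V' [phi [psi [H1 H2]]]] := isoV T.
have VV' : V (Sig V').
  by apply: (proj1 HVa V0 _ _ VV); exists phi; exists psi.
have VV'' := Hb _ VV'.
have g0 : g = 0.
  have [g' eg'] := Ssurj (comp phi g).
  have g'0 : g' = 0 := orth g' UX VV''.
  by rewrite -(comp1l g) -H1 -compA -eg' g'0 S0 comp0r.
have [s Hs] : exists s, comp f0 s = idm (Sig X).
  by apply: (E2 T); rewrite comp1r g0.
by rewrite -(comp1r f) -Hs compA (orth (comp f f0) UU VY) comp0l.
Qed.

Lemma b_d : Pb -> Pd.
Proof.
move=> Hb A B f Hf W x VW.
have [U1 [V1 [u [v [w [UU VV T]]]]]] := ttri (Sig A).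
have [z Hz] : exists z, comp z v = x.
  by apply: (E1 T); apply: orth UU VW.
have [V' [phi [psi [H1 H2]]]] := isoV T.
have VV' : V (Sig V').
  by apply: (proj1 HVa V1 _ _ VV); exists phi; exists psi.
have VV'' := Hb _ VV'.
have [v' ev'] := Ssurj (comp phi v).
have [y' Hy'] := Hf _ v' VV''.
exists (comp z (comp psi (Sf y'))).
by rewrite -!compA -Scomp Hy' ev' (compA psi) H1 comp1l Hz.
Qed.

Lemma d_c : Pd -> Pc.
Proof.
move=> Hd X Y f UX VY; have [Z HZ] := zero_ex.
have Hm : V_monic V (0 : hom X Z).
  by move=> W x VW; exists 0; rewrite comp0l (orth x UX VW).
have [y Hy] := Hd _ _ _ Hm Y f VY.
by rewrite -Hy S0 comp0r.
Qed.

Lemma L1 (X : Obj C) : (forall Y (f : hom X Y), V Y -> f = 0) -> U X.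
Proof.
move=> HX; have [U0 [V0 [f [g [h [UU VV T]]]]]] := ttri X.
have [s Hs] : exists s, comp f s = idm X.
  by apply: (E2 T); rewrite comp1r (HX _ g VV).
exact: (summand HUa Hs UU).
Qed.

Lemma c_a : Pc -> Pa.
Proof. move=> Hc X UX; apply: L1 => Y f VY; exact: Hc _ _ f UX VY. Qed.

End Pf.

Theorem mainTheorem11 (C : precat)
  (Sig : Obj C -> Obj C)
  (Sigf : forall A B : Obj C, hom A B -> hom (Sig A) (Sig B))
  (Delta : forall A B D : Obj C,
      hom A B -> hom B D -> hom D (Sig A) -> Prop)
  (HRT : is_right_triangulated Sigf Delta)
  (HSE : right_semi_equivalence Sigf Delta)
  (U V : Obj C -> Prop)
  (HUV : torsion_pair Delta U V) :
  [<-> (* (a) Sig U \subseteq U *)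
       (forall X : Obj C, U X -> U (Sig X));
       (* (b) Sig^{-1} V \subseteq V *)
       (forall X : Obj C, V (Sig X) -> V X);
       (* (c) R(Sig U, V) = 0 *)
       (forall (X Y : Obj C) (f : hom (Sig X) Y), U X -> V Y -> f = 0);
       (* (d) Sig preserves V-monic morphisms *)
       (forall (A B : Obj C) (f : hom A B),
          V_monic V f -> V_monic V (Sigf A B f))].
Proof.
have ac := a_c HUV.
have cb := c_b HRT HSE HUV.
have bc := b_c HRT HSE HUV.
have bd := b_d HRT HSE HUV.
have dc := d_c HRT HUV.
have ca := c_a HRT HSE HUV.
tfae.
- by move=> H; apply: cb; apply: ac.
- exact: bc.
- by move=> H; apply: bd; apply: cb.
- by move=> H; apply: ca; apply: dc.
Qed.
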